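(* A Heyting algebra $\boldsymbol{A}$ validates a Sahlqvist quasiequation $\Phi$ if and only if it validates every formula in $\mathsf{A}(\Phi)$.
   Context: Formulas over variables with $\land,\lor,\to,\lnot,0,1$; a formula $\varphi$ is valid in a Heyting algebra if it satisfies $\varphi\approx1$. A variable occurrence is positive (negative) if the number of negations and implication antecedents in whose scope it lies is even (odd); positive/negative formulas have all occurrences so. Sahlqvist antecedent: built from variables, negative formulas, $0,1$ by $\land,\lor$. Sahlqvist implication: positive formula, or $\lnot\varphi$ with $\varphi$ a Sahlqvist antecedent, or $\varphi\to\psi$ with $\varphi$ a Sahlqvist antecedent and $\psi$ positive. A Sahlqvist quasiequation is $\Phi=\varphi_1\land y\le z\,\&\cdots\&\,\varphi_m\land y\le z\Longrightarrow y\le z$ (universally quantified), $y,z$ distinct variables not in the $\varphi_i$, each $\varphi_i$ built from Sahlqvist implications by $\land,\lor$, $a\le b$ meaning $a\land b\approx a$. For each formula $\varphi(x_1..x_n)$ and $k\ge1$, $\boldsymbol{\varphi}^k$ is the finite set of formulas: $\boldsymbol{x_m}^k=\{x_m^1..x_m^k\}$; $\boldsymbol{1}^k=\{x_1^1\to x_1^1\}$; $\boldsymbol{0}^k=\{x_1^1,x_1^1\to0\}$; $(\boldsymbol{\psi\land\chi})^k=\boldsymbol{\psi}^k\cup\boldsymbol{\chi}^k$; with $\boldsymbol{\psi}^k=\{\psi_1..\psi_p\}$, $\boldsymbol{\chi}^k=\{\chi_1..\chi_t\}$: $(\boldsymbol{\lnot\psi})^k=\{\psi_1\to(\cdots(\psi_p\to0)\cdots)\}$,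 $(\boldsymbol{\psi\to\chi})^k=\{\psi_1\to(\cdots(\psi_p\to\chi_j)\cdots):j\le t\}$, $(\boldsymbol{\psi\lor\chi})^k=\{\psi_i\lor\chi_j:i\le p,j\le t\}$. For finite $\Gamma=\{\gamma_1..\gamma_n\}$, $\Gamma\to\varphi$ denotes $\{\gamma_1\to(\cdots(\gamma_n\to\varphi)\cdots)\}$. $\mathsf{A}(\Phi)=\bigcup_{k\ge1}\big(((\boldsymbol{\varphi_1}^k\to y)\cup\cdots\cup(\boldsymbol{\varphi_m}^k\to y))\to y\big)$, $y$ a variable not occurring in the $\boldsymbol{\varphi_i}^k$. *)

(* Defs.v *)
From mathcomp Require Import all_boot.
From Stdlib Require List.

Set Implicit Arguments.
Unset Strict Implicit.
Unset Printing Implicit Defensive.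

(* A bounded lattice with an implication satisfying residuation:
   a /\ b <= c  <->  a <= b -> c,  where  a <= b  means  a /\ b = a. *)
Record heyting := Heyting {
  hcar :> Type;
  hmeet : hcar -> hcar -> hcar;
  hjoin : hcar -> hcar -> hcar;
  himp  : hcar -> hcar -> hcar;
  hbot  : hcar;
  htop  : hcar;
  hmeetC : forall a b, hmeet a b = hmeet b a;
  hmeetA : forall a b c, hmeet a (hmeet b c) = hmeet (hmeet a b) c;
  hjoinC : forall a b, hjoin a b = hjoin b a;
  hjoinA : forall a b c, hjoin a (hjoin b c) = hjoin (hjoin a b) c;
  hmeet_join_absorb : forall a b, hmeet a (hjoin a b) = a;
  hjoin_meet_absorb : forall a b, hjoin a (hmeet a b) = a;
  hmeet_top : forall a, hmeet a htop = a;
  hjoin_bot : forall a, hjoin a hbot = a;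
  hresiduation : forall a b c,
    hmeet (hmeet a b) c = hmeet a b <-> hmeet a (himp b c) = a
}.

Definition hle (A : heyting) (a b : A) : Prop := hmeet a b = a.

Inductive fml (V : Type) : Type :=
| FVar of V
| FBot
| FTop
| FAnd of fml V & fml V
| FOr  of fml V & fml V
| FImp of fml V & fml V
| FNeg of fml V.
Arguments FBot {V}.
Arguments FTop {V}.

Fixpoint feval (V : Type) (A : heyting) (v : V -> A) (f : fml V) : A :=
  match f with
  | FVar x => v x
  | FBot => hbot A
  | FTop => htop A
  | FAnd a b => hmeet (feval v a) (feval v b)
  | FOr a b => hjoin (feval v a) (feval v b)
  | FImp a b => himp (feval v a) (feval v b)
  | FNeg a => himp (feval v a) (hbot A)
  end.

Definition fvalid (V : Type) (A : heyting) (f : fml V) : Prop :=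
  forall v : V -> A, feval v f = htop A.

Fixpoint fvars (V : Type) (f : fml V) : list V :=
  match f with
  | FVar x => [:: x]
  | FBot | FTop => [::]
  | FAnd a b | FOr a b | FImp a b => fvars a ++ fvars b
  | FNeg a => fvars a
  end.

Fixpoint allpol (V : Type) (s : bool) (f : fml V) : bool :=
  match f with
  | FVar _ => s
  | FBot | FTop => true
  | FAnd a b | FOr a b => allpol s a && allpol s b
  | FImp a b => allpol (~~ s) a && allpol s b
  | FNeg a => allpol (~~ s) a
  end.

Definition positive_fml (V : Type) (f : fml V) : bool := allpol true f.
Definition negative_fml (V : Type) (f : fml V) : bool := allpol false f.

Inductive sahl_ante (V : Type) : fml V -> Prop :=
| SA_var x : sahl_ante (FVar x)
| SA_negf f : negative_fml f -> sahl_ante f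
| SA_bot : sahl_ante FBot
| SA_top : sahl_ante FTop
| SA_and a b : sahl_ante a -> sahl_ante b -> sahl_ante (FAnd a b)
| SA_or a b : sahl_ante a -> sahl_ante b -> sahl_ante (FOr a b).

Inductive sahl_impl (V : Type) : fml V -> Prop :=
| SI_pos f : positive_fml f -> sahl_impl f
| SI_neg f : sahl_ante f -> sahl_impl (FNeg f)
| SI_imp a b : sahl_ante a -> positive_fml b -> sahl_impl (FImp a b).

Inductive sahl_body (V : Type) : fml V -> Prop :=
| SB_impl f : sahl_impl f -> sahl_body f
| SB_and a b : sahl_body a -> sahl_body b -> sahl_body (FAnd a b)
| SB_or a b : sahl_body a -> sahl_body b -> sahl_body (FOr a b).

(* A Sahlqvist quasiequation  phi_1 /\ y <= z & ... & phi_m /\ y <= z ==> y <= z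
   is represented by the list phis = [phi_1; ...; phi_m] and the variables y, z.
   Its well-formedness conditions: *)
Definition sahlqvist_quasi (phis : list (fml nat)) (y z : nat) : Prop :=
  y <> z /\
  (forall phi, List.In phi phis ->
     sahl_body phi /\ ~ List.In y (fvars phi) /\ ~ List.In z (fvars phi)).

Definition validates_quasi (A : heyting) (phis : list (fml nat)) (y z : nat)
  : Prop :=
  forall v : nat -> A,
    (forall phi, List.In phi phis -> hle (hmeet (feval v phi) (v y)) (v z)) ->
    hle (v y) (v z).

(* Variables of the translated formulas are pairs (m, j): (m, j) with j >= 1
   stands for the copy x_m^j of the original variable x_m.  The pair (0, 1)
   plays the role of x_1^1 used for the constants, and (0, 0) (never a copy)
   is the fresh variable y of A(Phi).  Finite sets of formulas are
   represented by lists. *)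
Definition xvar (m j : nat) : fml (nat * nat) := FVar (m, j).

Definition impl_list (V : Type) (G : list (fml V)) (f : fml V) : fml V :=
  foldr (@FImp V) f G.

Fixpoint bold (k : nat) (f : fml nat) : list (fml (nat * nat)) :=
  match f with
  | FVar m => [seq xvar m j | j <- iota 1 k]
  | FTop => [:: FImp (xvar 0 1) (xvar 0 1)]
  | FBot => [:: xvar 0 1; FImp (xvar 0 1) FBot]
  | FAnd a b => bold k a ++ bold k b
  | FNeg a => [:: impl_list (bold k a) FBot]
  | FImp a b => [seq impl_list (bold k a) c | c <- bold k b]
  | FOr a b => [seq FOr p q | p <- bold k a, q <- bold k b]
  end.

Definition yA : fml (nat * nat) := FVar (0, 0).

Definition A_formula (phis : list (fml nat)) (k : nat) : fml (nat * nat) :=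
  impl_list [seq impl_list (bold k phi) yA | phi <- phis] yA.

(* Main.v *)
Require Import Defs.
From mathcomp Require Import all_boot.
From Stdlib Require List.

Set Implicit Arguments.
Unset Strict Implicit.
Unset Printing Implicit Defensive.



Lemma meetI (A : heyting) (a : A) : hmeet a a = a.
Proof. by rewrite -{2}(hjoin_meet_absorb a a) hmeet_join_absorb. Qed.

Lemma le_refl (A : heyting) (a : A) : hle a a.
Proof. exact: meetI. Qed.

Lemma le_trans (A : heyting) (a b c : A) : hle a b -> hle b c -> hle a c.
Proof. rewrite /hle => Hab Hbc. by rewrite -{1}Hab -hmeetA Hbc Hab. Qed.

Lemma le_anti (A : heyting) (a b : A) : hle a b -> hle b a -> a = b.
Proof. rewrite /hle => Hab Hba. by rewrite -{1}Hab hmeetC. Qed.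

Lemma meet_l (A : heyting) (a b : A) : hle (hmeet a b) a.
Proof. by rewrite /hle hmeetC hmeetA meetI. Qed.

Lemma meet_r (A : heyting) (a b : A) : hle (hmeet a b) b.
Proof. by rewrite /hle -hmeetA meetI. Qed.

Lemma meet_glb (A : heyting) (x a b : A) : hle x a -> hle x b -> hle x (hmeet a b).
Proof. rewrite /hle => Ha Hb. by rewrite hmeetA Ha Hb. Qed.

Lemma le_meet_iff (A : heyting) (x a b : A) : hle x (hmeet a b) <-> hle x a /\ hle x b.
Proof.
split; last by case; apply: meet_glb.
move=> H; split; apply: le_trans H _; [exact: meet_l | exact: meet_r].
Qed.

Lemma le_join (A : heyting) (a b : A) : hle a b <-> hjoin a b = b.
Proof.
split => H.
  by rewrite -{1}H hjoinC hmeetC hjoin_meet_absorb.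
by rewrite /hle -H hmeet_join_absorb.
Qed.

Lemma join_l (A : heyting) (a b : A) : hle a (hjoin a b).
Proof. exact: hmeet_join_absorb. Qed.

Lemma join_r (A : heyting) (a b : A) : hle b (hjoin a b).
Proof. rewrite hjoinC; exact: join_l. Qed.

Lemma join_lub (A : heyting) (a b c : A) : hle a c -> hle b c -> hle (hjoin a b) c.
Proof. move=> /le_join Ha /le_join Hb; apply/le_join. by rewrite -hjoinA Hb Ha. Qed.

Lemma bot_le (A : heyting) (a : A) : hle (hbot A) a.
Proof. apply/le_join; by rewrite hjoinC hjoin_bot. Qed.

Lemma le_top (A : heyting) (a : A) : hle a (htop A).
Proof. exact: hmeet_top. Qed.

Lemma resid (A : heyting) (a b c : A) : hle (hmeet a b) c <-> hle a (himp b c).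
Proof. exact: hresiduation. Qed.

Lemma yoneda (A : heyting) (a b : A) : (forall x, hle x a <-> hle x b) -> a = b.
Proof. move=> H; apply: le_anti; [apply/H; exact: le_refl | apply/H; exact: le_refl]. Qed.

Lemma imp_top_l (A : heyting) (a : A) : himp (htop A) a = a.
Proof. apply: yoneda => x; rewrite -resid hmeet_top; tauto. Qed.

Lemma imp_topr (A : heyting) (a : A) : himp a (htop A) = htop A.
Proof. apply: le_anti; first exact: le_top. apply/resid; exact: le_top. Qed.

Lemma imp_self (A : heyting) (a : A) : himp a a = htop A.
Proof. apply: le_anti; first exact: le_top. apply/resid; exact: meet_r. Qed.

Lemma curry (A : heyting) (a b c : A) : himp a (himp b c) = himp (hmeet a b) c.
Proof. apply: yoneda => x. by rewrite -!resid hmeetA. Qed.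

Lemma imp_meet (A : heyting) (a b c : A) :
  hmeet (himp a b) (himp a c) = himp a (hmeet b c).
Proof. apply: yoneda => x. rewrite le_meet_iff -!resid le_meet_iff; tauto. Qed.

Lemma meet_bot (A : heyting) (a : A) : hmeet a (himp a (hbot A)) = hbot A.
Proof.
apply: le_anti; last exact: bot_le.
rewrite hmeetC; apply/resid; exact: le_refl.
Qed.

Lemma imp_top_iff (A : heyting) (a b : A) : himp a b = htop A <-> hle a b.
Proof.
split => H.
  have : hle (htop A) (himp a b) by rewrite H; exact: le_refl.
  by move/resid; rewrite hmeetC hmeet_top.
apply: le_anti; first exact: le_top. apply/resid; by rewrite hmeetC hmeet_top.
Qed.

Lemma distr (A : heyting) (a b c : A) :
  hjoin a (hmeet b c) = hmeet (hjoin a b) (hjoin a c).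
Proof.
apply: le_anti.
  apply: join_lub; first by apply: meet_glb; exact: join_l.
  apply: meet_glb; apply: le_trans (join_r _ _); [exact: meet_l | exact: meet_r].
apply/resid; apply: join_lub.
  apply/resid; apply: le_trans (meet_l _ _) (join_l _ _).
apply/resid; rewrite hmeetC; apply/resid; apply: join_lub.
  apply/resid; apply: le_trans (meet_l _ _) (join_l _ _).
apply/resid; rewrite hmeetC; exact: join_r.
Qed.

Lemma distr2 (A : heyting) (a b c : A) :
  hmeet (hjoin a c) (hjoin b c) = hjoin (hmeet a b) c.
Proof. by rewrite !(hjoinC _ c) distr. Qed.

Definition M (A : heyting) (w : nat * nat -> A) (s : list (fml (nat * nat))) : A :=
  foldr (@hmeet A) (htop A) (map (feval w) s).
Arguments M : simpl never.

Lemma M_nil (A : heyting) (w : nat * nat -> A) : M w [::] = htop A.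
Proof. by []. Qed.

Lemma M_cons (A : heyting) (w : nat * nat -> A) g s :
  M w (g :: s) = hmeet (feval w g) (M w s).
Proof. by []. Qed.

Lemma M_cat (A : heyting) (w : nat * nat -> A) s1 s2 :
  M w (s1 ++ s2) = hmeet (M w s1) (M w s2).
Proof.
elim: s1 => [|g s1 IH]; first by rewrite M_nil hmeetC hmeet_top.
by rewrite cat_cons !M_cons IH hmeetA.
Qed.

Lemma feval_impl_list (A : heyting) (w : nat * nat -> A) G f :
  feval w (impl_list G f) = himp (M w G) (feval w f).
Proof.
elim: G => [|g G IH]; first by rewrite M_nil imp_top_l.
by rewrite /= IH M_cons curry.
Qed.

Lemma M_imp (A : heyting) (w : nat * nat -> A) P Q :
  M w [seq impl_list P c | c <- Q] = himp (M w P) (M w Q).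
Proof.
elim: Q => [|c Q IH]; first by rewrite M_nil imp_topr.
by rewrite map_cons !M_cons feval_impl_list IH imp_meet.
Qed.

Lemma M_or1 (A : heyting) (w : nat * nat -> A) p Q :
  0 < size Q -> M w [seq FOr p q | q <- Q] = hjoin (feval w p) (M w Q).
Proof.
elim: Q => [//|q Q IH] _.
case: Q IH => [|q' Q] IH.
  by rewrite map_cons !M_cons /= M_nil !hmeet_top.
rewrite map_cons M_cons IH // [M w (q :: _)]M_cons /=.
by rewrite distr.
Qed.

Lemma M_or (A : heyting) (w : nat * nat -> A) P Q :
  0 < size P -> 0 < size Q ->
  M w [seq FOr p q | p <- P, q <- Q] = hjoin (M w P) (M w Q).
Proof.
elim: P => [//|p P IH] _ HQ.
rewrite map_cons /= M_cat M_or1 //.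
case: P IH => [|p' P] IH.
  by rewrite /= M_nil !M_cons M_nil !hmeet_top.
rewrite IH // M_cons distr2 /=.
done.
Qed.

Lemma bold_size k f : 0 < k -> 0 < size (bold k f).
Proof.
move=> Hk; elim: f => [m| | |a IHa b IHb|a IHa b IHb|a IHa b IHb|a IHa] //=.
- by rewrite size_map size_iota.
- by rewrite size_cat addn_gt0 IHa.
- by rewrite size_allpairs muln_gt0 IHa IHb.
- by rewrite size_map.
Qed.

Lemma bold_M (A : heyting) (w : nat * nat -> A) k f : 0 < k ->
  M w (bold k f) = feval (fun m => M w [seq xvar m j | j <- iota 1 k]) f.
Proof.
move=> Hk; elim: f => [m| | |a IHa b IHb|a IHa b IHb|a IHa b IHb|a IHa].
- by [].
- by rewrite /= !M_cons M_nil hmeet_top /= meet_bot.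
- by rewrite /= M_cons M_nil hmeet_top /= imp_self.
- by rewrite /= M_cat IHa IHb.
- by rewrite /= M_or ?bold_size // IHa IHb.
- by rewrite /= M_imp IHa IHb.
- by rewrite /= M_cons M_nil hmeet_top feval_impl_list IHa.
Qed.

Definition N (A : heyting) (u : nat -> A) (c : A) (phis : list (fml nat)) : A :=
  foldr (fun phi acc => hmeet (himp (feval u phi) c) acc) (htop A) phis.

Lemma M_A (A : heyting) (w : nat * nat -> A) k phis : 0 < k ->
  M w [seq impl_list (bold k phi) yA | phi <- phis] =
  N (fun m => M w [seq xvar m j | j <- iota 1 k]) (w (0,0)) phis.
Proof.
move=> Hk; elim: phis => [|phi phis IH]; first by rewrite M_nil.
by rewrite map_cons M_cons IH feval_impl_list bold_M.
Qed.

Lemma N_le (A : heyting) (u : nat -> A) c phis x :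
  hle x (N u c phis) <-> (forall phi, List.In phi phis -> hle (hmeet x (feval u phi)) c).
Proof.
elim: phis => [|phi phis IH] /=.
  split=> _; [by [] | exact: le_top].
rewrite le_meet_iff IH -resid; split.
  by case=> H1 H2 psi [<-|Hin]; [exact: H1 | exact: H2].
move=> H; split; [apply: H; left | move=> psi Hin; apply: H; right]; done.
Qed.

Lemma feval_ext (A : heyting) (u u' : nat -> A) f :
  (forall m, List.In m (fvars f) -> u m = u' m) -> feval u f = feval u' f.
Proof.
elim: f => [m| | |a IHa b IHb|a IHa b IHb|a IHa b IHb|a IHa] //= H.
- by apply: H; left.
- by rewrite IHa ?IHb // => m Hm; apply: H; apply: List.in_or_app; auto.
- by rewrite IHa ?IHb // => m Hm; apply: H; apply: List.in_or_app; auto.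
- by rewrite IHa ?IHb // => m Hm; apply: H; apply: List.in_or_app; auto.
- by rewrite IHa.
Qed.

Theorem proposition9p5 (A : heyting) (phis : list (fml nat)) (y z : nat) :
  sahlqvist_quasi phis y z ->
  (validates_quasi A phis y z <->
   (forall k : nat, 1 <= k -> fvalid A (A_formula phis k))).
Proof.
case=> Hyz Hphis; split.
- move=> Hq k Hk w.
  rewrite /A_formula feval_impl_list M_A //.
  set u := fun m => _.
  set c := w (0,0).
  apply/imp_top_iff.
  set b := N u c phis.
  pose v := fun n => if n == y then b else if n == z then c else u n.
  have Hzy : (z == y) = false by apply/eqP => E; apply: Hyz.
  have := Hq v.
  rewrite /v eqxx Hzy eqxx; apply => phi Hin.
  have [_ [Hy Hz]] := Hphis phi Hin.
  rewrite (@feval_ext _ _ u).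
    rewrite hmeetC; move: phi Hin {Hy Hz}; apply/N_le; exact: le_refl.
  move=> m Hm.
  case: (eqVneq m y) => [E|_]; first by subst m.
  case: (eqVneq m z) => [E|_]; first by subst m.
  by [].
- move=> HA v Hv.
  pose w := fun p : nat * nat => if p.2 == 0 then v z else v p.1.
  have := HA 1 isT w.
  rewrite /A_formula feval_impl_list M_A // => /imp_top_iff.
  set u := fun m => _.
  have Huv : forall m, u m = v m.
    by move=> m; rewrite /u /= M_cons M_nil hmeet_top.
  move=> HN; apply: le_trans HN.
  apply/N_le => phi Hin.
  rewrite (@feval_ext _ _ v); last by move=> m _; rewrite Huv.
  rewrite hmeetC; exact: Hv.
Qed.
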